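(* Let $T$ be a hyperplane (linear subspace of dimension $n-1$) in $\mathbf{R}^n$, $\alpha\in T$, $f:T\to T^\perp$ a function continuous at $\alpha$, $a=\alpha+f(\alpha)$, $A=\{\chi+f(\chi):\chi\in T\}$, and suppose $\mathrm{Tan}(A,a)\subseteq T$. Then $f$ is differentiable at $\alpha$ with $\mathrm{D}f(\alpha)=0$, and $\mathrm{Tan}(A,a)=T$.
   Context: For $A\subseteq\mathbf{R}^n$ and $a\in\mathbf{R}^n$, the tangent cone $\mathrm{Tan}(A,a)$ is the set of all $v\in\mathbf{R}^n$ such that for every $\varepsilon>0$ there exist $x\in A$ and $r>0$ with $|x-a|<\varepsilon$ and $|r(x-a)-v|<\varepsilon$ (Federer's definition). *)

(* Defs.v *)
From HB Require Import structures.
From mathcomp Require Import all_boot all_order all_algebra.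
From mathcomp Require Import reals.
Set Implicit Arguments. Unset Strict Implicit. Unset Printing Implicit Defensive.
Import Order.TTheory GRing.Theory Num.Theory.
Local Open Scope ring_scope.

Section Defs.
Variables (R : realType) (n : nat).

Definition dotv (u v : 'rV[R]_n) : R := \sum_(i < n) u 0 i * v 0 i.

Definition enorm (v : 'rV[R]_n) : R := Num.sqrt (dotv v v).

Definition perp (T : {vspace 'rV[R]_n}) (v : 'rV[R]_n) : Prop :=
  forall t, t \in T -> dotv t v = 0.

Definition Tan (A : 'rV[R]_n -> Prop) (a : 'rV[R]_n) (v : 'rV[R]_n) : Prop :=
  forall eps : R, 0 < eps ->
    exists x, exists r : R, A x /\ 0 < r /\
      enorm (x - a) < eps /\ enorm (r *: (x - a) - v) < eps.

Definition cont_at_in (T : {vspace 'rV[R]_n}) (f : 'rV[R]_n -> 'rV[R]_n)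
  (alpha : 'rV[R]_n) : Prop :=
  forall eps : R, 0 < eps -> exists delta : R, 0 < delta /\
    forall x, x \in T -> enorm (x - alpha) < delta ->
      enorm (f x - f alpha) < eps.

(* f (defined on the subspace T) is differentiable at alpha with derivative
   the map L (on T): f x = f alpha + L (x - alpha) + o(|x - alpha|)
   for x in T.  (L is applied only with L = 0 below, which is linear.) *)
Definition diff_at_in (T : {vspace 'rV[R]_n}) (f : 'rV[R]_n -> 'rV[R]_n)
  (alpha : 'rV[R]_n) (L : 'rV[R]_n -> 'rV[R]_n) : Prop :=
  forall eps : R, 0 < eps -> exists delta : R, 0 < delta /\
    forall x, x \in T -> enorm (x - alpha) < delta ->
      enorm (f x - f alpha - L (x - alpha)) <= eps * enorm (x - alpha).

End Defs.

(* Main.v *)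
Require Import Defs.
From HB Require Import structures.
From mathcomp Require Import all_boot all_order all_algebra.
From mathcomp Require Import reals.
From mathcomp Require Import boolp classical_sets filter topology normedtype.
From mathcomp Require Import ring lra.
From Stdlib Require Import Classical.
Import Order.TTheory GRing.Theory Num.Theory.
Import numFieldTopology.Exports numFieldNormedType.Exports.
Local Open Scope ring_scope.
Section H.
Context {R : realType} {m : nat}.
Implicit Types (u v w : 'rV[R]_m).

Lemma dotvC u v : dotv u v = dotv v u.
Proof. by apply: eq_bigr => i _; rewrite mulrC. Qed.
Lemma dotvDl u v w : dotv (u + v) w = dotv u w + dotv v w.
Proof. by rewrite /dotv -big_split; apply: eq_bigr => i _; rewrite mxE mulrDl. Qed.
Lemma dotvZl a u v : dotv (a *: u) v = a * dotv u v.
Proof. by rewrite /dotv mulr_sumr; apply: eq_bigr => i _; rewrite mxE mulrA. Qed.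
Lemma dotvNl u v : dotv (- u) v = - dotv u v.
Proof. by rewrite -scaleN1r dotvZl mulN1r. Qed.
Lemma dotvBl u v w : dotv (u - v) w = dotv u w - dotv v w.
Proof. by rewrite dotvDl dotvNl. Qed.
Lemma dotvDr u v w : dotv w (u + v) = dotv w u + dotv w v.
Proof. by rewrite dotvC dotvDl !(dotvC w). Qed.
Lemma dotvZr a u v : dotv v (a *: u) = a * dotv v u.
Proof. by rewrite dotvC dotvZl dotvC. Qed.
Lemma dotv_ge0 v : 0 <= dotv v v.
Proof. by apply: sumr_ge0 => i _; rewrite -expr2 sqr_ge0. Qed.
Lemma enorm_ge0 v : 0 <= enorm v.
Proof. exact: sqrtr_ge0. Qed.
Lemma enorm_sq v : enorm v ^+ 2 = dotv v v.
Proof. by rewrite sqr_sqrtr // dotv_ge0. Qed.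
Lemma coord_sq_le v i : v 0 i ^+ 2 <= dotv v v.
Proof.
rewrite /dotv (bigD1 i) //= expr2 lerDl; apply: sumr_ge0 => j _; by rewrite -expr2 sqr_ge0.
Qed.
Lemma coord_le v i : `|v 0 i| <= enorm v.
Proof. by rewrite -sqrtr_sqr /enorm ler_sqrt ?coord_sq_le // dotv_ge0. Qed.
Lemma enormZ a v : enorm (a *: v) = `|a| * enorm v.
Proof.
rewrite /enorm dotvZl dotvZr mulrA sqrtrM; last by rewrite -expr2 sqr_ge0.
by rewrite -expr2 sqrtr_sqr.
Qed.
Lemma enormN v : enorm (- v) = enorm v.
Proof. by rewrite -scaleN1r enormZ normrN1 mul1r. Qed.
Lemma enorm0 : enorm (0 : 'rV[R]_m) = 0.
Proof. by rewrite -(scale0r (0 : 'rV[R]_m)) enormZ normr0 mul0r. Qed.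
Lemma enorm_lt v eps : 0 < eps -> dotv v v < eps ^+ 2 -> enorm v < eps.
Proof.
move=> e0 h; rewrite /enorm -(ger0_norm (ltW e0)) -sqrtr_sqr.
by rewrite ltr_sqrt // exprn_gt0.
Qed.
Lemma enorm_le v eps : 0 <= eps -> dotv v v <= eps ^+ 2 -> enorm v <= eps.
Proof.
move=> e0 h; rewrite /enorm -(ger0_norm e0) -sqrtr_sqr.
by rewrite ler_sqrt // exprn_ge0.
Qed.
Lemma dot_small (a b : 'rV[R]_m) (eta : R) : (forall i, `|a 0 i| <= eta) ->
  `|dotv a b| <= m%:R * eta * enorm b.
Proof.
move=> h; rewrite /dotv; apply: (le_trans (ler_norm_sum _ _ _)).
rewrite -mulrA mulr_natl -[m in _ *+ m]card_ord -sumr_const.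
apply: ler_sum => i _; rewrite normrM; apply: ler_pM => //.
exact: coord_le.
Qed.
Lemma dot_entries v (eta : R) : (forall i, `|v 0 i| <= eta) ->
  dotv v v <= m%:R * eta ^+ 2.
Proof.
move=> h; rewrite /dotv mulr_natl -[m in _ *+ m]card_ord -sumr_const.
apply: ler_sum => i _; rewrite -expr2 -real_normK ?num_real //.
by rewrite lerXn2r ?nnegrE // (le_trans _ (h i)).
Qed.
End H.
Section A.
Context {R : realType}.
Implicit Types k eps c D E N s : R.

Lemma ar1 k eps : 1 <= k -> 0 < eps -> k * (eps / k / 2) ^+ 2 < eps ^+ 2.
Proof.
move=> k1 e0; have k0 : k != 0 by rewrite gt_eqF // (lt_le_trans ltr01 k1).
have -> : k * (eps / k / 2) ^+ 2 = eps ^+ 2 / (4 * k) by field; rewrite k0 /=.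
rewrite ltr_pdivrMr; last by nra.
have : 0 < eps ^+ 2 by rewrite exprn_gt0.
nra.
Qed.

Lemma ar2 c D E N : 0 < c -> 0 <= D -> 0 < E -> 0 < N ->
  N ^+ 2 = D ^+ 2 + E ^+ 2 -> E * (c + 1) <= c * N -> c * D < E -> False.
Proof.
move=> c0 D0 E0 N0 hN h1 h2.
have h3 : (E * (c + 1)) ^+ 2 <= (c * N) ^+ 2.
  by rewrite ler_pXn2r // ?nnegrE; nra.
have h4 : (c * D) ^+ 2 < E ^+ 2.
  by rewrite ltr_pXn2r // ?nnegrE; nra.
nra.
Qed.

Lemma ar3 D E eps : 0 <= D -> 0 <= E -> D < eps / 2 -> E < eps / 2 ->
  D ^+ 2 + E ^+ 2 < eps ^+ 2.
Proof. move=> *; nra. Qed.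

Lemma ar4 D E eps : 0 <= D -> 0 <= E -> D < eps / 2 -> E <= D ->
  D ^+ 2 + E ^+ 2 < eps ^+ 2.
Proof. move=> *; nra. Qed.
End A.
Section C.
Local Open Scope classical_set_scope.
Lemma cluster_exists (R : realType) m (P : R -> set 'rV[R]_m) :
  (forall d, 0 < d -> P d !=set0) ->
  (forall d d', 0 < d -> d <= d' -> P d `<=` P d') ->
  (forall d, 0 < d -> P d `<=` [set v | forall i, `|v 0 i| <= 1]) ->
  exists w : 'rV[R]_m, forall d e, 0 < d -> 0 < e ->
    exists u, P d u /\ forall i, `|w 0 i - u 0 i| < e.
Proof.
move=> Pne Pmon PK.
pose K := [set v : 'rV[R]_m | forall i, (fun _ : 'I_m => `[(-1)%R, 1%R]%classic) i (v ord0 i)].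
have cK : compact K.
  by apply: rV_compact => _; exact: segment_compact.
pose F := filter_from [set d : R | 0 < d] P.
have FF : Filter F.
  apply: filter_from_filter; first by exists 1%R; rewrite /= ltr01.
  move=> i j i0 j0; exists (Num.min i j); first by rewrite /= ?lt_min ?i0 ?j0 ?ge_min ?lexx ?orbT.
  move=> x Px; split.
    by apply: (Pmon (Num.min i j) i) => //; rewrite /= ?lt_min ?i0 ?j0 ?ge_min ?lexx ?orbT.
  by apply: (Pmon (Num.min i j) j) => //; rewrite /= ?lt_min ?i0 ?j0 ?ge_min ?lexx ?orbT.
have PF : ProperFilter F by apply: filter_from_proper.
have FK : F K.
  exists 1 => //= v /(PK 1 ltr01) h i /=.
  by rewrite in_itv /= -ler_norml h.
have [w [Kw cw]] := cK F PF FK.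
exists w => d e d0 e0.
have := cw (P d) (ball w e) _ (@nbhsx_ballx _ _ w e e0).
  case; first by exists d.
move=> u [Pu [_ bu]]; exists u; split => // i.
exact: bu.
Qed.
End C.

Section H2.
Context {R : realType} {m : nat}.
Implicit Types (u v w : 'rV[R]_m).
Lemma dotvBr u v w : dotv w (u - v) = dotv w u - dotv w v.
Proof. by rewrite dotvC dotvBl !(dotvC w). Qed.
Lemma orth u v : dotv u v = 0 -> dotv (u + v) (u + v) = dotv u u + dotv v v.
Proof.
move=> h; rewrite dotvDl !dotvDr h (dotvC v u) h; lra.
Qed.
Lemma enorm_gt0 v : v != 0 -> 0 < enorm v.
Proof.
move=> v0; have [i vi] : exists i, v 0 i != 0.
  apply: NNPP => H; move/eqP: v0; apply; apply/rowP => j.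
  rewrite mxE; apply/eqP; apply: NNPP => H2; apply: H; exists j; exact/negP.
by apply: lt_le_trans (coord_le v i); rewrite normr_gt0.
Qed.
Lemma mxBE (A B : 'rV[R]_m) i : (A - B) 0 i = A 0 i - B 0 i.
Proof. by rewrite !mxE. Qed.
End H2.

Theorem lemma2p43 (R : realType) (n : nat) (T : {vspace 'rV[R]_n.+1})
  (hT : \dim T = n)
  (alpha : 'rV[R]_n.+1) (halpha : alpha \in T)
  (f : 'rV[R]_n.+1 -> 'rV[R]_n.+1)
  (hf : forall x, x \in T -> perp T (f x))
  (hcont : cont_at_in T f alpha)
  (hTan : forall v, Tan (fun y => exists2 x, x \in T & y = x + f x)
                        (alpha + f alpha) v -> v \in T) :
  diff_at_in T f alpha (fun _ => 0) /\
  (forall v, Tan (fun y => exists2 x, x \in T & y = x + f x)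
                 (alpha + f alpha) v <-> v \in T).
Proof.
have hperp x : x \in T -> forall t, t \in T -> dotv t (f x - f alpha) = 0.
  by move=> xT t tT; rewrite dotvBr (hf x xT t tT) (hf alpha halpha t tT) subrr.
have hy x : x + f x - (alpha + f alpha) = (x - alpha) + (f x - f alpha).
  by rewrite opprD addrACA.
have hN x : x \in T -> dotv (x + f x - (alpha + f alpha)) (x + f x - (alpha + f alpha))
   = enorm (x - alpha) ^+ 2 + enorm (f x - f alpha) ^+ 2.
  by move=> xT; rewrite hy orth ?enorm_sq // (hperp x xT (x - alpha) (memvB xT halpha)).
pose k : R := (n.+1)%:R.
have k1 : 1 <= k by rewrite /k ler1n.
have k0 : 0 < k by apply: lt_le_trans k1.
have hdiff : diff_at_in T f alpha (fun _ => 0).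
  move=> c c0; apply: NNPP => H.
  have bad : forall d, 0 < d -> exists x, [/\ x \in T, enorm (x - alpha) < d &
      c * enorm (x - alpha) < enorm (f x - f alpha)].
    move=> d d0; apply: NNPP => H2; apply: H; exists d; split => // x xT xd.
    rewrite subr0 leNgt; apply/negP => lt; apply: H2; exists x; split => //.
  pose N x := enorm (x + f x - (alpha + f alpha)).
  have Npos x : x \in T -> c * enorm (x - alpha) < enorm (f x - f alpha) -> 0 < N x.
    move=> xT lt.
    have E0 : 0 < enorm (f x - f alpha).
      by apply: le_lt_trans lt; apply: mulr_ge0; [exact: ltW | exact: enorm_ge0].
    rewrite /N /enorm sqrtr_gt0 hN //.
    have := sqr_ge0 (enorm (x - alpha)); have := exprn_gt0 2 E0; lra.
  pose P (d : R) := (fun v : 'rV[R]_n.+1 => exists x, [/\ x \in T, enorm (x - alpha) < d,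
      c * enorm (x - alpha) < enorm (f x - f alpha) &
      v = (N x)^-1 *: (x + f x - (alpha + f alpha))]).
  have p1 : forall d : R, 0 < d -> exists u, P d u.
    move=> d d0; have [x [xT xd xc]] := bad d d0.
    by exists ((N x)^-1 *: (x + f x - (alpha + f alpha))); exists x.
  have p2 : forall d d' : R, 0 < d -> d <= d' -> forall u, P d u -> P d' u.
    move=> d d' d0 le v [x [xT xd xc ->]]; exists x; split => //.
    exact: lt_le_trans xd le.
  have p3 : forall d : R, 0 < d -> forall u, P d u -> forall i, `|u 0 i| <= 1.
    move=> d d0 v [x [xT xd xc ->]] i; apply: le_trans (coord_le _ _) _.
    have Nx := Npos x xT xc.
    rewrite enormZ -/(N x) ger0_norm; last by rewrite invr_ge0 ltW.
    by rewrite mulVf // gt_eqF.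
  have [w hw] := @cluster_exists R n.+1 P p1 p2 p3.
  have wT : w \in T.
    apply: hTan => eps e0.
    have e20 : 0 < eps / 2 by rewrite divr_gt0.
    have [d1 [d10 hd1]] := hcont (eps / 2) e20.
    pose d := Num.min d1 (eps / 2).
    have d0 : 0 < d by rewrite lt_min d10 e20.
    pose eta := eps / k / 2.
    have eta0 : 0 < eta by rewrite !divr_gt0.
    have [v [[x [xT xd xc ->]] hv]] := hw d eta d0 eta0.
    have Nx := Npos x xT xc.
    exists (x + f x), (N x)^-1; split; last split; last split.
    + by exists x.
    + by rewrite invr_gt0.
    + apply: enorm_lt => //; rewrite hN //; apply: ar3; rewrite ?enorm_ge0 //.
        by apply: lt_le_trans xd _; rewrite ge_min lexx orbT.
      by apply: hd1 => //; apply: lt_le_trans xd _; rewrite ge_min lexx.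
    + apply: enorm_lt => //; apply: le_lt_trans (@dot_entries _ _ _ eta _) _.
        by move=> i; rewrite mxBE distrC ltW.
      exact: ar1.
  pose q := c / (c + 1).
  have c10 : 0 < c + 1 by lra.
  have q0 : 0 < q by rewrite divr_gt0.
  pose eta := q / k.
  have eta0 : 0 < eta by rewrite divr_gt0.
  have [v [[x [xT xd xc ->]] hv]] := hw 1 eta ltr01 eta0.
  have N0 := Npos x xT xc.
  have E0 : 0 < enorm (f x - f alpha).
    by apply: le_lt_trans xc; apply: mulr_ge0; [exact: ltW | exact: enorm_ge0].
  have keq : k * eta = q by rewrite /eta mulrC divfK // gt_eqF.
  have key : `|dotv (w - (N x)^-1 *: (x + f x - (alpha + f alpha))) (f x - f alpha)|
      <= k * eta * enorm (f x - f alpha).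
    by apply: dot_small => i; rewrite mxBE; exact: ltW (hv i).
  have hd : dotv (w - (N x)^-1 *: (x + f x - (alpha + f alpha))) (f x - f alpha)
      = - ((N x)^-1 * enorm (f x - f alpha) ^+ 2).
    rewrite dotvBl (hperp x xT w wT) sub0r hy dotvZl dotvDl.
    by rewrite (hperp x xT (x - alpha) (memvB xT halpha)) add0r enorm_sq.
  rewrite hd normrN ger0_norm in key; last first.
    by apply: mulr_ge0; [rewrite invr_ge0 ltW | exact: sqr_ge0].
  rewrite keq mulrC in key.
  rewrite ler_pdivrMr // expr2 (mulrC q) -mulrA ler_pM2l // in key.
  have hq : q * (c + 1) = c by rewrite /q divfK // gt_eqF.
  apply: (ar2 _ _ _ _ c0 (enorm_ge0 (x - alpha)) E0 N0 _ _ xc).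
    by rewrite /N enorm_sq hN.
  by apply: le_trans (ler_wpM2r (ltW c10) key) _; rewrite mulrAC hq.
split => // v; split; first exact: hTan.
move=> vT eps e0.
have [->|v0] := eqVneq v 0.
  exists (alpha + f alpha), 1; split; last split; last split.
  - by exists alpha.
  - exact: ltr01.
  - by rewrite subrr enorm0.
  - by rewrite subrr scaler0 subr0 enorm0.
pose V := enorm v.
have V0 : 0 < V := enorm_gt0 _ v0.
have e20 : 0 < eps / 2 by rewrite divr_gt0.
have [d1 [d10 h1]] := hdiff (eps / 2 / V) (divr_gt0 e20 V0).
have [d2 [d20 h2]] := hdiff 1 ltr01.
pose s := Num.min d1 (Num.min d2 (eps / 2)) / 2.
have m0 : 0 < Num.min d1 (Num.min d2 (eps / 2)) by rewrite !lt_min d10 d20 e20.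
have s0 : 0 < s by rewrite divr_gt0.
have sm : s < Num.min d1 (Num.min d2 (eps / 2)) by rewrite /s; lra.
move: sm; rewrite !lt_min => /and3P [sd1 sd2 se].
pose t := s / V.
have t0 : 0 < t by rewrite divr_gt0.
pose x := alpha + t *: v.
have xT : x \in T by rewrite memvD // memvZ.
have dx : x - alpha = t *: v by rewrite /x addrC addKr.
have Dx : enorm (x - alpha) = s.
  by rewrite dx enormZ ger0_norm ?ltW // /t -/V divfK // gt_eqF.
exists (x + f x), t^-1; split; last split; last split.
- by exists x.
- by rewrite invr_gt0.
- apply: enorm_lt => //; rewrite hN //; apply: ar4; rewrite ?enorm_ge0 ?Dx //.
  by have := h2 x xT; rewrite Dx subr0 mul1r; apply.
- rewrite hy dx scalerDr scalerA mulVf ?gt_eqF // scale1r addrAC subrr add0r.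
  rewrite enormZ ger0_norm ?invr_ge0 ?ltW //.
  have := h1 x xT; rewrite Dx subr0 => /(_ sd1) h.
  apply: le_lt_trans (ler_wpM2l _ h) _; first by rewrite invr_ge0 ltW.
  have -> : t^-1 * (eps / 2 / V * s) = eps / 2.
    by rewrite /t; field; rewrite !gt_eqF.
  lra.
Qed.
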